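(* Let $K$ be a polygonal element and suppose $\widetilde V(K)\subset V(K)$, $\widetilde{\bm W}(K)\subset\bm W(K)$ satisfy: $\bm n\times V(K)\subset\bm M(\partial K)$ and $\bm n\times\bm W(K)\times\bm n\subset\bm M(\partial K)$; $\nabla\times V(K)\subset\widetilde{\bm W}(K)$ and $\nabla\times\bm W(K)\subset\widetilde V(K)$; and for every $\bm\mu\in\bm M(\partial K)$, $\bm n\times\bm\mu=0$ implies $\bm\mu=\bm0$. Then $\mathrm{tr}:\widetilde V^\perp(K)\times\widetilde{\bm W}^\perp(K)\to\bm M(\partial K)$ is an isomorphism if and only if: $\gamma$ is injective on $\widetilde V^\perp(K)$, $\gamma$ is injective on $\widetilde{\bm W}^\perp(K)$, and $\gamma\widetilde V^\perp(K)\oplus\gamma\widetilde{\bm W}^\perp(K)=\bm M(\partial K)$.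
   Context: Conventions in 2D: $\nabla\times\bm v=-\partial_yv_1+\partial_xv_2$, $\nabla\times p=(\partial_yp,-\partial_xp)^T$, $\bm n\times\bm v=-n_2v_1+n_1v_2$, $\bm n\times p=(n_2p,-n_1p)^T$, $\bm n\times\bm w\times\bm n:=\bm w-(\bm w\cdot\bm n)\bm n$, with $\bm n$ the unit outward normal of $K$. $V(K)\subset H^1(K)$, $\bm W(K)\subset\bm H(\mathrm{curl};K)$ are finite-dimensional polynomial spaces and $\bm M(\partial K)$ a finite-dimensional space of vector functions on $\partial K$. $\perp$ denotes $L^2(K)$-orthogonal complement in $V(K)$, resp. $\bm W(K)$. $\mathrm{tr}(v,\bm w):=(\bm n\times v+\bm n\times\bm w\times\bm n)|_{\partial K}$. $\gamma$ denotes the map $v\mapsto\bm n\times v|_{\partial K}$ on scalar functions and $\bm w\mapsto\bm n\times\bm w\times\bm n|_{\partial K}$ on vector functions; $\gamma\widetilde V^\perp(K)$, $\gamma\widetilde{\bm W}^\perp(K)$ are the images. *)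

(* Defs.v *)
From HB Require Import structures.
From mathcomp Require Import all_boot all_order all_algebra.
From mathcomp Require Import all_classical all_reals all_analysis.
Set Implicit Arguments. Unset Strict Implicit. Unset Printing Implicit Defensive.
Import Order.TTheory GRing.Theory Num.Theory.
Local Open Scope classical_set_scope.
Local Open Scope ring_scope.

Section Defs.
Variable R : realType.
Local Notation P2 := (R * R)%type.

Definition lin_subspace (D : Type) (U : lmodType R) (S : set (D -> U)) :=
  S (fun=> 0) /\ forall (a : R) f g, S f -> S g -> S (fun z => a *: f z + g z).

Definition fin_dim (D : Type) (U : lmodType R) (S : set (D -> U)) :=
  exists s : seq (D -> U), forall f,
    S f <-> exists c : 'I_(size s) -> R,
      f = fun z => \sum_(j < size s) c j *: (nth (fun=> 0) s j) z.

Definition poly_fun (f : P2 -> R) :=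
  exists p : {poly {poly R}}, forall x y, f (x, y) = (p.[y%:P]).[x].
Definition vpoly_fun (w : P2 -> P2) :=
  poly_fun (fun z => (w z).1) /\ poly_fun (fun z => (w z).2).

Definition dx (f : P2 -> R) (z : P2) : R := derive1 (fun s => f (s, z.2)) z.1.
Definition dy (f : P2 -> R) (z : P2) : R := derive1 (fun s => f (z.1, s)) z.2.
Definition curl_v (w : P2 -> P2) (z : P2) : R :=
  - dy (fun q => (w q).1) z + dx (fun q => (w q).2) z.
Definition curl_s (p : P2 -> R) (z : P2) : P2 := (dy p z, - dx p z).

Definition nx_s (n : P2) (v : R) : P2 := (n.2 * v, - (n.1 * v)).
Definition nx_v (n : P2) (m : P2) : R := - (n.2 * m.1) + n.1 * m.2.
Definition nxwxn (n : P2) (w : P2) : P2 :=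
  let d := w.1 * n.1 + w.2 * n.2 in (w.1 - d * n.1, w.2 - d * n.2).
Definition dot2 (a b : P2) : R := a.1 * b.1 + a.2 * b.2.

(** polygons, given by the cyclic list of their N vertices *)
Variable N : nat.
Implicit Types vtx : 'I_N -> P2.

Definition edge_pt vtx (i : 'I_N) (t : R) : P2 :=
  ((vtx i).1 + t * ((vtx (ordS i)).1 - (vtx i).1),
   (vtx i).2 + t * ((vtx (ordS i)).2 - (vtx i).2)).

Definition simple_polygon vtx :=
  (3 <= N)%N /\
  forall (i j : 'I_N) (s t : R), i != j -> 0 <= s <= 1 -> 0 <= t <= 1 ->
    edge_pt vtx i s = edge_pt vtx j t ->
    (j = ordS i /\ s = 1 /\ t = 0) \/ (i = ordS j /\ s = 0 /\ t = 1).

(* counterclockwise orientation: positive signed (shoelace) area *)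
Definition ccw vtx :=
  0 < \sum_(i < N) ((vtx i).1 * (vtx (ordS i)).2 - (vtx (ordS i)).1 * (vtx i).2).

Definition polygonal_element vtx := simple_polygon vtx /\ ccw vtx.

Definition on_boundary vtx (z : P2) :=
  exists (i : 'I_N) (t : R), 0 <= t <= 1 /\ z = edge_pt vtx i t.

(* horizontal ray from z to the right crosses edge i (ray-casting rule) *)
Definition crosses vtx (z : P2) (i : 'I_N) : bool :=
  let a := vtx i in let b := vtx (ordS i) in
  ((z.2 < a.2) != (z.2 < b.2)) &&
  (z.1 < a.1 + (z.2 - a.2) * (b.1 - a.1) / (b.2 - a.2)).

(* the (open) polygonal region K enclosed by the polygon *)
Definition region vtx : set P2 :=
  [set z | ~ on_boundary vtx z /\ odd #|[set i | crosses vtx z i]|].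

(* unit outward normal on edge i (counterclockwise orientation) *)
Definition normal vtx (i : 'I_N) : P2 :=
  let e1 := (vtx (ordS i)).1 - (vtx i).1 in
  let e2 := (vtx (ordS i)).2 - (vtx i).2 in
  let l := Num.sqrt (e1 ^+ 2 + e2 ^+ 2) in (e2 / l, - e1 / l).

(** functions on the boundary: a value for each edge i and each interior
    parameter t in (0,1) of that edge (vertices have measure zero on dK) *)
Definition bparam := {t : R | 0 < t < 1}.
Definition bpoint vtx (p : 'I_N * bparam) : P2 := edge_pt vtx p.1 (sval p.2).
Definition bnormal vtx (p : 'I_N * bparam) : P2 := normal vtx p.1.

Definition gamma_s vtx (v : P2 -> R) : 'I_N * bparam -> P2 :=
  fun p => nx_s (bnormal vtx p) (v (bpoint vtx p)).
Definition gamma_v vtx (w : P2 -> P2) : 'I_N * bparam -> P2 :=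
  fun p => nxwxn (bnormal vtx p) (w (bpoint vtx p)).
Definition trace vtx (v : P2 -> R) (w : P2 -> P2) : 'I_N * bparam -> P2 :=
  fun p => gamma_s vtx v p + gamma_v vtx w p.

Definition L2s vtx (u v : P2 -> R) : \bar R :=
  (\int[(@lebesgue_measure R \x @lebesgue_measure R)%E]_(z in region vtx)
     (u z * v z)%:E)%E.
Definition L2v vtx (u v : P2 -> P2) : \bar R :=
  (\int[(@lebesgue_measure R \x @lebesgue_measure R)%E]_(z in region vtx)
     (dot2 (u z) (v z))%:E)%E.

Definition perp_s vtx (V Vt : set (P2 -> R)) : set (P2 -> R) :=
  [set v | V v /\ forall u, Vt u -> L2s vtx v u = 0%E].
Definition perp_v vtx (W Wt : set (P2 -> P2)) : set (P2 -> P2) :=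
  [set w | W w /\ forall u, Wt u -> L2v vtx w u = 0%E].

End Defs.

(* Main.v *)
Require Import Defs.
From HB Require Import structures.
From mathcomp Require Import all_boot all_order all_algebra.
From mathcomp Require Import all_classical all_reals all_analysis.
From mathcomp Require Import ring lra.
Import Order.TTheory GRing.Theory Num.Theory.
Local Open Scope classical_set_scope.
Local Open Scope ring_scope.
Set Implicit Arguments. Unset Strict Implicit. Unset Printing Implicit Defensive.

Section Good.
Variable R : realType.
Local Notation P2 := (R * R)%type.

Definition good (f : P2 -> R) :=
  measurable_fun setT f /\
  forall X : R, exists C : R, forall z : P2, `|z.1| <= X -> `|z.2| <= X -> `|f z| <= C.

Lemma good_cst c : good (fun=> c).
Proof. split; first exact: measurable_cst. by move=> X; exists `|c|. Qed.

Lemma good_fst : good (fun z => z.1).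
Proof. split; first exact: measurable_fst. by move=> X; exists X => z. Qed.

Lemma good_snd : good (fun z => z.2).
Proof. split; first exact: measurable_snd. by move=> X; exists X => z. Qed.

Lemma good_add f g : good f -> good g -> good (fun z => f z + g z).
Proof.
move=> [mf bf] [mg bg]; split; first exact: measurable_realfun.measurable_funD.
move=> X; have [C1 h1] := bf X; have [C2 h2] := bg X; exists (C1 + C2) => z z1 z2.
by rewrite (le_trans (ler_normD _ _))// lerD// ?h1 ?h2.
Qed.

Lemma good_mul f g : good f -> good g -> good (fun z => f z * g z).
Proof.
move=> [mf bf] [mg bg]; split; first exact: measurable_realfun.measurable_funM.
move=> X; have [C1 h1] := bf X; have [C2 h2] := bg X; exists (C1 * C2) => z z1 z2.
by rewrite normrM ler_pM// ?h1 ?h2.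
Qed.

Lemma good_ext f g : good f -> (forall z, f z = g z) -> good g.
Proof. by move=> gf e; rewrite -(_ : f = g)//; apply/funext. Qed.

Lemma good_poly1 (c : {poly R}) : good (fun z => c.[z.1]).
Proof.
elim/poly_ind: c => [|q k IH].
  have h0 := good_cst 0. apply: (good_ext h0). by move=> z; rewrite horner0.
apply: (good_ext (good_add (good_mul IH (@good_fst)) (good_cst k))) => z.
by rewrite hornerMXaddC.
Qed.

Lemma good_poly (f : P2 -> R) : poly_fun f -> good f.
Proof.
move=> [p hp].
have -> : f = fun z => (p.[z.2%:P]).[z.1] by apply/funext => -[x y]; rewrite hp.
elim/poly_ind: p {hp} => [|q c IH].
  have h0 := good_cst 0; apply: (good_ext h0) => z; by rewrite !horner0.
apply: (good_ext (good_add (good_mul IH (@good_snd)) (good_poly1 c))) => z.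
by rewrite hornerMXaddC hornerD hornerM hornerC.
Qed.
End Good.

Section Region.
Variable R : realType.
Local Notation P2 := (R * R)%type.
Variable N : nat.
Variable vtx : 'I_N -> P2.

Lemma odd_card (P : pred 'I_N) : odd #|[set i | P i]| = \big[addb/false]_i P i.
Proof.
rewrite -sum1_card big_mkcond /=.
rewrite (big_morph odd oddD (erefl : odd 0 = false)).
apply: eq_bigr => i _; case: (boolP (P i)) => h; [rewrite mem_set | rewrite memNset ?h]. all: try done. by apply/negP.
Qed.

Lemma even_changes (s : 'I_N -> bool) :
  \big[addb/false]_i (s i != s (ordS i)) = false.
Proof.
have e : forall a b : bool, (a != b) = a (+) b by do 2!case.
under eq_bigr do rewrite e.
rewrite big_split /=.
have e2 : \big[addb/false]_i s (ordS i) = \big[addb/false]_i s i.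
  by rewrite [RHS](reindex_inj (@ordS_inj N)).
by rewrite e2 addbb.
Qed.

Definition Xb : R := \sum_i (`|(vtx i).1| + `|(vtx i).2|).

Lemma vtx_bound i : `|(vtx i).1| <= Xb /\ `|(vtx i).2| <= Xb.
Proof.
have h : `|(vtx i).1| + `|(vtx i).2| <= Xb.
  rewrite /Xb (bigD1 i) //= lerDl; apply: sumr_ge0 => j _; exact: addr_ge0.
by split; apply: le_trans h; rewrite ?lerDl ?lerDr.
Qed.

Lemma interp_bound (a b : P2) (z2 X : R) : ((z2 < a.2) != (z2 < b.2)) ->
  `|a.1| <= X -> `|b.1| <= X -> `|a.2| <= X -> `|b.2| <= X ->
  `|z2| <= X /\ `|a.1 + (z2 - a.2) * (b.1 - a.1) / (b.2 - a.2)| <= X.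
Proof.
move=> hc; rewrite !ler_norml => /andP[ha1 ha1'] /andP[hb1 hb1'] /andP[ha2 ha2'] /andP[hb2 hb2'].
have hcase : (a.2 <= z2 < b.2) \/ (b.2 <= z2 < a.2).
  move: hc; case: (ltrP z2 a.2) => h1; case: (ltrP z2 b.2) => h2 //= _.
    by right.
  by left.
have hd : b.2 - a.2 != 0.
  by apply/eqP => h; case: hcase => /andP[h1 h2]; lra.
set t := (z2 - a.2) / (b.2 - a.2).
have ht : t * (b.2 - a.2) = z2 - a.2 by rewrite /t divfK.
have -> : a.1 + (z2 - a.2) * (b.1 - a.1) / (b.2 - a.2) = a.1 + t * (b.1 - a.1).
  by rewrite /t mulrAC.
have [ht0 ht1] : 0 <= t /\ t <= 1.
  case: hcase => /andP[h1 h2]; split; nra.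
split.
  by case: hcase => /andP[h1 h2]; apply/andP; split; lra.
by apply/andP; split; nra.
Qed.

Lemma region_bound z : region vtx z -> `|z.1| <= Xb /\ `|z.2| <= Xb.
Proof.
move=> [_ hodd]; rewrite odd_card in hodd.
have [i hi] : exists i, crosses vtx z i.
  case: (pickP (fun i => crosses vtx z i)) => [i hi|h]; first by exists i.
  by move: hodd; rewrite big1.
move: (hi); rewrite /crosses => /andP[hc hlt].
have [a1 a2] := vtx_bound i; have [b1 b2] := vtx_bound (ordS i).
have [hz2 hint] := interp_bound hc a1 b1 a2 b2.
split => //; rewrite ler_norml; apply/andP; split; last first.
  by apply: ltW; apply: lt_le_trans hlt _; move: hint; rewrite ler_norml => /andP[].
rewrite leNgt; apply/negP => hz1.
move: hodd; rewrite (eq_bigr (fun j => (z.2 < (vtx j).2) != (z.2 < (vtx (ordS j)).2))).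
  by rewrite even_changes.
move=> j _; rewrite /crosses; case hcj: (_ != _) => //=.
have [a1' a2'] := vtx_bound j; have [b1' b2'] := vtx_bound (ordS j).
have [_ ] := interp_bound hcj a1' b1' a2' b2'; rewrite ler_norml => /andP[h _].
exact: lt_le_trans hz1 h.
Qed.

End Region.

Ltac mtac := first
  [ exact: measurable_cst | exact: measurable_fst | exact: measurable_snd
  | apply: measurable_realfun.measurable_funD; mtac
  | apply: measurable_realfun.measurable_funM; mtac
  | apply: measurable_realfun.measurable_funB; mtac
  | apply: measurable_realfun.measurable_funX; mtac ].

Section Meas.
Variable R : realType.
Local Notation P2 := (R * R)%type.

Definition degen (a b : P2) : bool := (b.1 - a.1 == 0) && (b.2 - a.2 == 0).
Definition segP (a b z : P2) : bool :=
  if degen a b then (z.1 == a.1) && (z.2 == a.2)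
  else [&& (z.1 - a.1) * (b.2 - a.2) - (z.2 - a.2) * (b.1 - a.1) == 0,
           0 <= (z.1 - a.1) * (b.1 - a.1) + (z.2 - a.2) * (b.2 - a.2) &
           (z.1 - a.1) * (b.1 - a.1) + (z.2 - a.2) * (b.2 - a.2)
             <= (b.1 - a.1) ^+ 2 + (b.2 - a.2) ^+ 2].

Lemma segP_iff (a b z : P2) :
  (exists t, 0 <= t <= 1 /\ z = (a.1 + t * (b.1 - a.1), a.2 + t * (b.2 - a.2)))
  <-> segP a b z.
Proof.
rewrite /segP /degen; case: a b z => [a1 a2] [b1 b2] [z1 z2] /=.
case: ifP => [/andP[/eqP h1 /eqP h2]|hne].
  split.
    by move=> [t [_ [-> ->]]]; rewrite h1 h2 !mulr0 !addr0 !eqxx.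
  move=> /andP[/eqP -> /eqP ->]; exists 0; rewrite !mul0r !addr0; split => //.
  by rewrite lexx ler01.
have hs : 0 < (b1 - a1) ^+ 2 + (b2 - a2) ^+ 2.
  have q1 := sqr_ge0 (b1 - a1); have q2 := sqr_ge0 (b2 - a2).
  move/negbT: hne; rewrite negb_and => /orP[] h.
    have p : 0 < (b1 - a1) ^+ 2 by rewrite lt_def sqrf_eq0 h sqr_ge0.
    lra.
  have p : 0 < (b2 - a2) ^+ 2 by rewrite lt_def sqrf_eq0 h sqr_ge0.
  lra.
split.
  move=> [t [/andP[t0 t1] [-> ->]]]; apply/and3P; split.
  - by apply/eqP; ring.
  - have -> : (a1 + t * (b1 - a1) - a1) * (b1 - a1) + (a2 + t * (b2 - a2) - a2) * (b2 - a2)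
       = t * ((b1 - a1) ^+ 2 + (b2 - a2) ^+ 2) by ring.
    by apply: mulr_ge0 => //; exact: ltW.
  - have -> : (a1 + t * (b1 - a1) - a1) * (b1 - a1) + (a2 + t * (b2 - a2) - a2) * (b2 - a2)
       = t * ((b1 - a1) ^+ 2 + (b2 - a2) ^+ 2) by ring.
    by rewrite ler_piMl // ltW.
move=> /and3P[/eqP hc h0 h1].
set s := (b1 - a1) ^+ 2 + (b2 - a2) ^+ 2 in hs h1 *.
set dt := (z1 - a1) * (b1 - a1) + (z2 - a2) * (b2 - a2) in h0 h1 *.
have hs0 : s != 0 by rewrite gt_eqF.
exists (dt / s); split.
  apply/andP; split; first by rewrite divr_ge0 // ltW.
  by rewrite ler_pdivrMr // mul1r.
have ht : dt / s * s = dt by rewrite divfK.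
congr (_, _).
  have e : (z1 - a1 - dt / s * (b1 - a1)) * s
     = (b2 - a2) * ((z1 - a1) * (b2 - a2) - (z2 - a2) * (b1 - a1)) + (dt - dt / s * s) * (b1 - a1).
    by rewrite /s /dt; ring.
  rewrite hc ht subrr mulr0 mul0r addr0 in e.
  by move/eqP: e; rewrite mulf_eq0 (negbTE hs0) orbF subr_eq0 => /eqP e2; rewrite -e2; ring.
have e : (z2 - a2 - dt / s * (b2 - a2)) * s
   = - (b1 - a1) * ((z1 - a1) * (b2 - a2) - (z2 - a2) * (b1 - a1)) + (dt - dt / s * s) * (b2 - a2).
  by rewrite /s /dt; ring.
rewrite hc ht subrr mulr0 mul0r addr0 in e.
by move/eqP: e; rewrite mulf_eq0 (negbTE hs0) orbF subr_eq0 => /eqP e2; rewrite -e2; ring.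
Qed.

End Meas.

Section Meas2.
Variable R : realType.
Local Notation P2 := (R * R)%type.

Lemma measurable_xor (f g : P2 -> bool) :
  measurable_fun setT f -> measurable_fun setT g ->
  measurable_fun setT (fun x => f x (+) g x).
Proof.
move=> mf mg.
rewrite (_ : (fun x => _) = fun x => (f x && ~~ g x) || (~~ f x && g x)).
  by apply: measurable_or; apply: measurable_and => //; apply: measurable_neg.
by apply/funext => x; case: (f x); case: (g x).
Qed.

Lemma mfold_or (I : Type) (s : seq I) (F : I -> P2 -> bool) :
  (forall i, measurable_fun setT (F i)) ->
  measurable_fun setT (fun z => \big[orb/false]_(i <- s) F i z).
Proof.
move=> hF; elim: s => [|x s IH].
  rewrite (_ : (fun z => _) = fun=> false); first exact: measurable_cst.
  by apply/funext => z; rewrite big_nil.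
rewrite (_ : (fun z => _) = fun z => F x z || \big[orb/false]_(i <- s) F i z).
  exact: measurable_or.
by apply/funext => z; rewrite big_cons.
Qed.

Lemma mfold_xor (I : Type) (s : seq I) (F : I -> P2 -> bool) :
  (forall i, measurable_fun setT (F i)) ->
  measurable_fun setT (fun z => \big[addb/false]_(i <- s) F i z).
Proof.
move=> hF; elim: s => [|x s IH].
  rewrite (_ : (fun z => _) = fun=> false); first exact: measurable_cst.
  by apply/funext => z; rewrite big_nil.
rewrite (_ : (fun z => _) = fun z => F x z (+) \big[addb/false]_(i <- s) F i z).
  exact: measurable_xor.
by apply/funext => z; rewrite big_cons.
Qed.

Lemma msegP (a b : P2) : measurable_fun setT (segP a b).
Proof.
rewrite /segP; case: (degen a b).
  by apply: measurable_and; apply: measurable_realfun.measurable_fun_eqr; mtac.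
apply: measurable_and; first by apply: measurable_realfun.measurable_fun_eqr; mtac.
by apply: measurable_and; apply: measurable_realfun.measurable_fun_ler; mtac.
Qed.

Variable N : nat.
Variable vtx : 'I_N -> P2.

Lemma mcrosses i : measurable_fun setT (fun z => crosses vtx z i).
Proof.
rewrite /crosses.
rewrite (_ : (fun z => _) = fun z =>
   ((z.2 < (vtx i).2) (+) (z.2 < (vtx (ordS i)).2)) &&
   (z.1 < (vtx i).1 + (z.2 - (vtx i).2) * ((vtx (ordS i)).1 - (vtx i).1) /
            ((vtx (ordS i)).2 - (vtx i).2))); last first.
  by apply/funext => z; congr (_ && _); case: (_ < _); case: (_ < _).
apply: measurable_and.
  by apply: measurable_xor; apply: measurable_realfun.measurable_fun_ltr; mtac.
by apply: measurable_realfun.measurable_fun_ltr; mtac.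
Qed.

Lemma region_eq : region vtx =
  [set z | (~~ \big[orb/false]_i segP (vtx i) (vtx (ordS i)) z) &&
           \big[addb/false]_i crosses vtx z i].
Proof.
apply/seteqP; split => z; rewrite /region /=.
  move=> [hb ho]; apply/andP; split; last by rewrite -odd_card.
  rewrite big_has; apply/negP => /hasP [i _ hi]; apply: hb.
  by have [t [ht ->]] := (segP_iff _ _ _).2 hi; rewrite /on_boundary; exists i, t.
move=> /andP[hb ho]; split; last by rewrite odd_card.
move=> [i [t [ht ez]]]; move/negP: hb; apply; rewrite big_has.
apply/hasP; exists i; first exact: mem_index_enum.
by apply/segP_iff; exists t; split => //; rewrite ez.
Qed.

Lemma measurable_region : measurable (region vtx).
Proof.
rewrite region_eq.
have mf : measurable_fun setT (fun z =>
   (~~ \big[orb/false]_i segP (vtx i) (vtx (ordS i)) z) &&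
   \big[addb/false]_i crosses vtx z i).
  apply: measurable_and; first apply: measurable_neg.
    by apply: mfold_or => i; exact: msegP.
  by apply: mfold_xor => i; exact: mcrosses.
have := mf measurableT [set true] I; rewrite setTI.
exact.
Qed.

End Meas2.

Section Integ.
Variable R : realType.
Local Notation P2 := (R * R)%type.
Variable N : nat.
Variable vtx : 'I_N -> P2.
Local Notation mu := (@lebesgue_measure R \x @lebesgue_measure R)%E.

Lemma mreg : measurable (region vtx : set (R * R)).
Proof. exact: measurable_region. Qed.


Lemma box_fin (X : R) : (mu (`[(- X)%R, X]%classic `*` `[(- X)%R, X]%classic) < +oo)%E.
Proof.
rewrite product_measure1E //.
change ((@lebesgue_measure R (`[(- X)%R, X]%classic : set R)) * (@lebesgue_measure R (`[(- X)%R, X]%classic : set R)) < +oo)%E.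
rewrite !lebesgue_measure_itv /=.
by case: ifP => _; rewrite ?mul0e -?EFinD -?EFinM ?ltry.
Qed.

Lemma region_box : region vtx `<=` (`[(- Xb vtx)%R, Xb vtx]%classic `*` `[(- Xb vtx)%R, Xb vtx]%classic).
Proof.
move=> z /region_bound [h1 h2]; split => /=; rewrite in_itv /= -ler_norml //.
Qed.

Lemma region_fin : (mu (region vtx) < +oo)%E.
Proof.
apply: le_lt_trans (box_fin (Xb vtx)).
apply: le_measure; rewrite ?inE //; first exact: measurable_region.
  by apply: measurableX; exact: measurable_itv.
exact: region_box.
Qed.

Lemma int_good (f : P2 -> R) : good f -> mu.-integrable (region vtx) (EFin \o f).
Proof.
move=> [mf bf]; have [C hC] := bf (Xb vtx).
have mR : measurable (region vtx) := measurable_region vtx.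
apply: (@le_integrable _ _ _ mu _ mR (EFin \o f) (cst `|C|%:E)).
- apply/measurable_realfun.measurable_EFinP; exact: measurable_funS mf.
- move=> z /region_bound [h1 h2] /=; rewrite lee_fin normr_id.
  exact: le_trans (hC z h1 h2) (ler_norm C).
apply/integrableP; split; first exact: measurable_cst.
rewrite (eq_integral (cst `|C|%:E)); last by move=> z _; rewrite /= normr_id.
rewrite integral_cst //; apply: lte_mul_pinfty => //.
exact: region_fin.
Qed.

End Integ.

Section Lin.
Variable R : realType.
Local Notation P2 := (R * R)%type.
Variable N : nat.
Variable vtx : 'I_N -> P2.

Lemma gamma_s_lin (f g : P2 -> R) (a : R) p :
  gamma_s vtx (fun z => a *: f z + g z) p = a *: gamma_s vtx f p + gamma_s vtx g p.
Proof.
rewrite /gamma_s /nx_s; case: (bnormal vtx p) => n1 n2 /=.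
set F := f _; set G := g _.
transitivity ((n2 * (a * F + G), - (n1 * (a * F + G)))); first by [].
transitivity ((a * (n2 * F) + n2 * G, a * (- (n1 * F)) + - (n1 * G))); last by [].
congr (_, _); ring.
Qed.

Lemma gamma_v_lin (f g : P2 -> P2) (a : R) p :
  gamma_v vtx (fun z => a *: f z + g z) p = a *: gamma_v vtx f p + gamma_v vtx g p.
Proof.
rewrite /gamma_v /nxwxn; case: (bnormal vtx p) => n1 n2 /=.
case: (f (bpoint vtx p)) => f1 f2; case: (g (bpoint vtx p)) => g1 g2 /=.
transitivity (((a * f1 + g1) - ((a * f1 + g1) * n1 + (a * f2 + g2) * n2) * n1,
               (a * f2 + g2) - ((a * f1 + g1) * n1 + (a * f2 + g2) * n2) * n2)); first by [].
transitivity ((a * (f1 - (f1 * n1 + f2 * n2) * n1) + (g1 - (g1 * n1 + g2 * n2) * n1),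
               a * (f2 - (f1 * n1 + f2 * n2) * n2) + (g2 - (g1 * n1 + g2 * n2) * n2))); last by [].
congr (_, _); ring.
Qed.

End Lin.

Section Perp.
Variable R : realType.
Local Notation P2 := (R * R)%type.
Variable N : nat.
Variable vtx : 'I_N -> P2.

Lemma perp_s_sub (V Vt : set (P2 -> R)) v v' :
  lin_subspace V -> (forall u, V u -> poly_fun u) -> Vt `<=` V ->
  perp_s vtx V Vt v -> perp_s vtx V Vt v' ->
  perp_s vtx V Vt (fun z => -1 *: v' z + v z).
Proof.
move=> [_ hV] hp hsub [Vv hv] [Vv' hv']; split; first exact: hV.
move=> u Vtu; rewrite /L2s.
have gu := good_poly (hp u (hsub u Vtu)).
have gv := good_poly (hp v Vv); have gv' := good_poly (hp v' Vv').
have hl : forall a b c : R, (-1 *: b + a) * c = a * c - b * c.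
  by move=> a b c; rewrite /GRing.scale /=; ring.
under eq_integral => z _ do rewrite hl EFinB.
rewrite integralB_EFin //; last 3 first.
- exact: measurable_region.
- exact: int_good (good_mul gv gu).
- exact: int_good (good_mul gv' gu).
by move: (hv u Vtu) (hv' u Vtu); rewrite /L2s => -> ->; rewrite sube0.
Qed.

Lemma good_dot (w u : P2 -> P2) : vpoly_fun w -> vpoly_fun u ->
  good (fun z => dot2 (w z) (u z)).
Proof.
move=> [w1 w2] [u1 u2].
exact: (good_add (good_mul (good_poly w1) (good_poly u1))
                 (good_mul (good_poly w2) (good_poly u2))).
Qed.

Lemma perp_v_sub (W Wt : set (P2 -> P2)) w w' :
  lin_subspace W -> (forall u, W u -> vpoly_fun u) -> Wt `<=` W ->
  perp_v vtx W Wt w -> perp_v vtx W Wt w' ->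
  perp_v vtx W Wt (fun z => -1 *: w z + w' z).
Proof.
move=> [_ hW] hp hsub [Ww hw] [Ww' hw']; split; first exact: hW.
move=> u Wtu; rewrite /L2v.
have pu := hp u (hsub u Wtu).
have hl : forall a b c : P2, dot2 (-1 *: a + b) c = dot2 b c - dot2 a c.
  move=> [a1 a2] [b1 b2] [c1 c2].
  transitivity (dot2 (-1 * a1 + b1, -1 * a2 + b2) (c1, c2)); first by [].
  rewrite /dot2 /=; ring.
under eq_integral => z _ do rewrite hl EFinB.
rewrite integralB_EFin //; last 3 first.
- exact: measurable_region.
- exact: int_good (good_dot (hp w' Ww') pu).
- exact: int_good (good_dot (hp w Ww) pu).
by move: (hw u Wtu) (hw' u Wtu); rewrite /L2v => -> ->; rewrite sube0.
Qed.

End Perp.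

Unset Implicit Arguments.

Theorem lemma5p1 (R : realType) (N : nat) (vtx : 'I_N -> (R * R)%type)
  (V Vt : set ((R * R)%type -> R)) (W Wt : set ((R * R)%type -> (R * R)%type))
  (M : set ('I_N * bparam R -> (R * R)%type)) :
  (* K is a polygonal element *)
  polygonal_element vtx ->
  (* V(K), W(K): finite-dimensional spaces of polynomial (vector) functions *)
  lin_subspace V -> fin_dim V -> (forall v, V v -> poly_fun v) ->
  lin_subspace W -> fin_dim W -> (forall w, W w -> vpoly_fun w) ->
  (* M(dK): finite-dimensional space of vector functions on dK *)
  lin_subspace M -> fin_dim M ->
  (* Vt(K) subspace of V(K), Wt(K) subspace of W(K) *)
  lin_subspace Vt -> Vt `<=` V ->
  lin_subspace Wt -> Wt `<=` W ->
  (* n x V(K) in M(dK), n x W(K) x n in M(dK) *)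
  (forall v, V v -> M (gamma_s vtx v)) ->
  (forall w, W w -> M (gamma_v vtx w)) ->
  (* curl V(K) in Wt(K), curl W(K) in Vt(K) *)
  (forall v, V v -> Wt (curl_s v)) ->
  (forall w, W w -> Vt (curl_v w)) ->
  (* n x mu = 0 implies mu = 0 on M(dK) *)
  (forall mu, M mu -> (forall p, nx_v (bnormal vtx p) (mu p) = 0) -> mu = (fun=> 0)) ->
  (* tr : Vt^perp x Wt^perp -> M(dK) is an isomorphism *)
  ((forall v w v' w', perp_s vtx V Vt v -> perp_v vtx W Wt w ->
        perp_s vtx V Vt v' -> perp_v vtx W Wt w' ->
        trace vtx v w = trace vtx v' w' -> v = v' /\ w = w') /\
   (forall mu, M mu -> exists v w, perp_s vtx V Vt v /\ perp_v vtx W Wt w /\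
        trace vtx v w = mu))
  <->
  (* gamma injective on Vt^perp *)
  ((forall v v', perp_s vtx V Vt v -> perp_s vtx V Vt v' ->
        gamma_s vtx v = gamma_s vtx v' -> v = v') /\
  (* gamma injective on Wt^perp *)
   (forall w w', perp_v vtx W Wt w -> perp_v vtx W Wt w' ->
        gamma_v vtx w = gamma_v vtx w' -> w = w') /\
  (* gamma Vt^perp + gamma Wt^perp = M(dK), and the sum is direct *)
   (forall v w, perp_s vtx V Vt v -> perp_v vtx W Wt w ->
        gamma_s vtx v = gamma_v vtx w -> gamma_s vtx v = (fun=> 0)) /\
   (forall mu, M mu <-> exists v w, perp_s vtx V Vt v /\ perp_v vtx W Wt w /\
        mu = (fun p => gamma_s vtx v p + gamma_v vtx w p))).
Proof.
move=> hpoly hV fV pV hW fW pW hM fM hVt sVt hWt sWt gV gW cV cW hmu.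
have z_s : perp_s vtx V Vt (fun=> 0).
  split; first exact: hV.1.
  move=> u _; rewrite /L2s.
  under eq_integral => z _ do rewrite mul0r.
  exact: integral0.
have z_v : perp_v vtx W Wt (fun=> 0).
  split; first exact: hW.1.
  move=> u _; rewrite /L2v.
  under eq_integral => z _ do rewrite /dot2 /= !mul0r addr0.
  exact: integral0.
have gs0 : gamma_s vtx (fun=> 0) = fun=> 0.
  by apply/funext => p; rewrite /gamma_s /nx_s mulr0 mulr0 oppr0.
have gv0 : gamma_v vtx (fun=> 0) = fun=> 0.
  by apply/funext => p; rewrite /gamma_v /nxwxn /= !mul0r addr0 !mul0r subr0.
split.
  move=> [inj surj]; split; [|split; [|split]].
  - move=> v v' pv pv' e.
    have et : trace vtx v (fun=> 0) = trace vtx v' (fun=> 0) by rewrite /trace e.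
    by have [] := inj v (fun=> 0) v' (fun=> 0) pv z_v pv' z_v et.
  - move=> w w' pw pw' e.
    have et : trace vtx (fun=> 0) w = trace vtx (fun=> 0) w' by rewrite /trace e.
    by have [] := inj (fun=> 0) w (fun=> 0) w' z_s pw z_s pw' et.
  - move=> v w pv pw e.
    have et : trace vtx v (fun=> 0) = trace vtx (fun=> 0) w.
      by apply/funext => p; rewrite /trace gv0 gs0 e addr0 add0r.
    have [hv _] := inj v (fun=> 0) (fun=> 0) w pv z_v z_s pw et.
    by rewrite hv gs0.
  - move=> mu; split.
      move=> Mmu; have [v [w [pv [pw e]]]] := surj mu Mmu.
      by exists v, w; split => //; split => //; rewrite -e.
    move=> [v [w [[Vv _] [[Ww _] ->]]]].
    have e : (fun p => gamma_s vtx v p + gamma_v vtx w p) =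
             (fun z => 1 *: gamma_s vtx v z + gamma_v vtx w z).
      by apply/funext => p; rewrite scale1r.
    by rewrite e; apply: hM.2; [exact: gV | exact: gW].
move=> [injv [injw [dsum hMiff]]]; split.
  move=> v w v' w' pv pw pv' pw' e.
  have pdv := perp_s_sub hV pV sVt pv pv'.
  have pdw := perp_v_sub hW pW sWt pw pw'.
  have eg : gamma_s vtx (fun z => -1 *: v' z + v z) =
            gamma_v vtx (fun z => -1 *: w z + w' z).
    apply/funext => p; rewrite gamma_s_lin gamma_v_lin !scaleN1r.
    have ep := congr1 (fun f => f p) e; rewrite /trace /= in ep.
    have -> : gamma_s vtx v p = gamma_s vtx v' p + gamma_v vtx w' p - gamma_v vtx w p.
      by rewrite -ep addrK.
    by rewrite -addrA addKr addrC.
  have h0 := dsum _ _ pdv pdw eg.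
  have eh : gamma_s vtx (fun z => -1 *: v' z + v z) = gamma_s vtx (fun=> 0) by rewrite h0 gs0.
  have hdv := injv _ _ pdv z_s eh.
  have evv : v = v'.
    apply/funext => z; have := congr1 (fun f => f z) hdv => /=.
    by rewrite scaleN1r addrC => /eqP; rewrite subr_eq0 => /eqP.
  subst v'; split => //.
  apply: injw pw pw' _; apply/funext => p.
  by have := congr1 (fun f => f p) e; rewrite /trace => /addrI.
move=> mu Mmu; have [v [w [pv [pw e]]]] := (hMiff mu).1 Mmu.
by exists v, w; split => //; split => //; rewrite e.
Qed.
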